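(* With the notation of the context, let $\bm c\in\mathbb{R}^e$ and let $\bm p=(\rho,\sigma,t_\rho,t_\sigma)$ be a profile. There exists a sequence compatible with $\bm p$ that satisfies the equality constraints for $\bm c$ if and only if there are vectors $\bm a,\bm d_c,\bm d_\infty\in\mathbb{R}^d$ with $\bm d_c\neq\bm 0$ such that, for all $i\in\{1,\dots,n\}$ and $j\in\{1,\dots,m\}$: (1) $\bm r_i^\top\bm a=\rho(i)$ and $\bm r_i^\top\bm d_\infty=0$ whenever $t_\rho(i)\in\{-1,1\}$; $\bm s_i^\top\bm a=\sigma(i)$ and $\bm s_i^\top\bm d_\infty=0$ whenever $t_\sigma(i)\in\{-1,1\}$; (2) $\bm r_i^\top\bm a=\rho(i)$, $\bm r_i^\top\bm d_c=0$, $\bm r_i^\top\bm d_\infty=0$ whenever $t_\rho(i)=0$; $\bm s_i^\top\bm a=\sigma(i)$, $\bm s_i^\top\bm d_c=0$, $\bm s_i^\top\bm d_\infty=0$ whenever $t_\sigma(i)=0$; (3) $\bm r_i^\top\bm d_c>0$ (resp. $<0$) whenever $t_\rho(i)=1$ (resp. $-1$); $\bm s_i^\top\bm d_c>0$ (resp. $<0$) whenever $t_\sigma(i)=1$ (resp. $-1$); (4) $\bm r_i^\top\bm d_\infty>0$ (resp. $<0$) whenever $t_\rho(i)=\omega$ (resp. $-\omega$); $\bm s_i^\top\bm d_\infty>0$ (resp. $<0$) whenever $t_\sigma(i)=\omega$ (resp. $-\omega$); (5) $\bm u_j^\top\bm d_c=\bm u_j^\top\bm d_\infty=0$, $\bm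 v_j^\top\bm d_c=\bm v_j^\top\bm d_\infty=0$, and $(\bm u_j-\bm v_j)^\top\bm a=\bm w_j^\top\bm c+d_j$.
   Context: Fixed data: $\bm r_i,\bm s_i\in\mathbb{Q}^d$, $\bm t_i\in\mathbb{Q}^e$, $h_i\in\mathbb{Q}$ for $i\in[1,n]$ and $\bm u_j,\bm v_j\in\mathbb{Q}^d$, $\bm w_j\in\mathbb{Q}^e$, $d_j\in\mathbb{Q}$ for $j\in[1,m]$. A profile is a tuple $\bm p=(\rho,\sigma,t_\rho,t_\sigma)$ of functions $\rho,\sigma\colon\{1,\dots,n\}\to\mathbb{R}\cup\{-\omega,\omega\}$ and $t_\rho,t_\sigma\colon\{1,\dots,n\}\to\{-\omega,-1,0,1,\omega\}$. For a sequence $(\bm a_k)_{k\ge1}$ in $\mathbb{R}^d$ let $\bm\rho_i=(\bm r_i^\top\bm a_k)_{k\ge1}$ and $\bm\sigma_i=(\bm s_i^\top\bm a_k)_{k\ge1}$. A sequence of pairwise distinct vectors is compatible with $\bm p$ if for every $i$ the following hold for $\bm\rho_i$ w.r.t. $(\rho(i),t_\rho(i))$ and for $\bm\sigma_i$ w.r.t. $(\sigma(i),t_\sigma(i))$: type $0$: constantly equal to the value; type $1$ (resp. $-1$): strictly increasing (resp. strictly decreasing) converging from below (resp. above) to the real value; type $\omega$ (resp. $-\omega$): strictly increasing diverging to $\infty$ (resp. strictly decreasing diverging to $-\infty$), with value $\omega$ (resp. $-\omega$). A sequence $(\bm a_k)$ satisfies the equality constraints for $\bm c$ if $\bm u_j^\top\bm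 a_k=\bm v_j^\top\bm a_\ell+\bm w_j^\top\bm c+d_j$ for all $j$ and all $k<\ell$. *)

(* Defs.v *)
From HB Require Import structures.
From mathcomp Require Import all_boot all_order all_algebra.
From mathcomp Require Import all_classical all_reals all_analysis.
Set Implicit Arguments. Unset Strict Implicit. Unset Printing Implicit Defensive.
Import Order.TTheory GRing.Theory Num.Theory.
Import numFieldNormedType.Exports.
Local Open Scope classical_set_scope.
Local Open Scope ring_scope.

Inductive ptype : Type := TNegOmega | TNeg | TZero | TPos | TPosOmega.

Definition qdot (R : realType) (dim : nat) (r : 'rV[rat]_dim) (a : 'rV[R]_dim) : R :=
  \sum_(k < dim) ratr (r 0 k) * a 0 k.

(* A real sequence x behaves according to (value v, type t);
   values in R u {-omega, omega} are modelled by extended reals \bar R. *)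
Definition seq_behaves (R : realType) (x : nat -> R) (v : \bar R) (t : ptype) : Prop :=
  match t with
  | TZero => exists c : R, v = c%:E /\ (forall k, x k = c)
  | TPos => exists c : R, v = c%:E /\ (forall k, x k < x k.+1) /\ (x @ \oo --> c)
  | TNeg => exists c : R, v = c%:E /\ (forall k, x k.+1 < x k) /\ (x @ \oo --> c)
  | TPosOmega => v = +oo%E /\ (forall k, x k < x k.+1) /\ (x @ \oo --> +oo)
  | TNegOmega => v = -oo%E /\ (forall k, x k.+1 < x k) /\ (x @ \oo --> -oo)
  end.

(* A sequence (a_k) (indexed from 0 instead of 1) of pairwise distinct vectors
   is compatible with the profile (rho, sigma, t_rho, t_sigma). *)
Definition compatible (R : realType) (d n : nat)
  (r s : 'I_n -> 'rV[rat]_d)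
  (rho sigma : 'I_n -> \bar R) (trho tsigma : 'I_n -> ptype)
  (a : nat -> 'rV[R]_d) : Prop :=
  injective a /\
  forall i : 'I_n,
    seq_behaves (fun k => qdot (r i) (a k)) (rho i) (trho i) /\
    seq_behaves (fun k => qdot (s i) (a k)) (sigma i) (tsigma i).

Definition eq_constraints (R : realType) (d e m : nat)
  (u v : 'I_m -> 'rV[rat]_d) (w : 'I_m -> 'rV[rat]_e) (dd : 'I_m -> rat)
  (c : 'rV[R]_e) (a : nat -> 'rV[R]_d) : Prop :=
  forall (j : 'I_m) (k l : nat), (k < l)%N ->
    qdot (u j) (a k) = qdot (v j) (a l) + qdot (w j) c + ratr (dd j).

Definition profile_wf (R : realType) (n : nat)
  (rho : 'I_n -> \bar R) (t : 'I_n -> ptype) : Prop :=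
  forall i, (t i = TPosOmega -> rho i = +oo%E) /\ (t i = TNegOmega -> rho i = -oo%E).

(* Main.v *)
Require Import Defs.
From HB Require Import structures.
From mathcomp Require Import all_boot all_order all_algebra.
From mathcomp Require Import all_classical all_reals all_analysis.
From mathcomp Require Import ring lra.
Import Order.TTheory GRing.Theory Num.Theory.
Import numFieldNormedType.Exports.
Local Open Scope classical_set_scope.
Local Open Scope ring_scope.


Section Helpers.
Variable R : realType.

Lemma qdotBl d (u v : 'rV[rat]_d) (x : 'rV[R]_d) :
  qdot (u - v) x = qdot u x - qdot v x.
Proof.
rewrite /qdot -sumrB; apply: eq_bigr => k _.
by rewrite !mxE rmorphB /= mulrBl.
Qed.

Lemma qdotNl d (u : 'rV[rat]_d) (x : 'rV[R]_d) : qdot (- u) x = - qdot u x.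
Proof.
rewrite /qdot -sumrN; apply: eq_bigr => k _.
by rewrite !mxE rmorphN /= mulNr.
Qed.

Lemma qdot0l d (x : 'rV[R]_d) : qdot (0 : 'rV[rat]_d) x = 0.
Proof. by rewrite /qdot big1 // => k _; rewrite mxE rmorph0 mul0r. Qed.

Lemma qdotDr d (u : 'rV[rat]_d) (x y : 'rV[R]_d) :
  qdot u (x + y) = qdot u x + qdot u y.
Proof.
rewrite /qdot -big_split; apply: eq_bigr => k _.
by rewrite !mxE mulrDr.
Qed.

Lemma qdotZr d (u : 'rV[rat]_d) (l : R) (x : 'rV[R]_d) :
  qdot u (l *: x) = l * qdot u x.
Proof.
rewrite /qdot mulr_sumr; apply: eq_bigr => k _.
by rewrite !mxE mulrCA.
Qed.

Lemma qdotBr d (u : 'rV[rat]_d) (x y : 'rV[R]_d) :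
  qdot u (x - y) = qdot u x - qdot u y.
Proof.
rewrite /qdot -sumrB; apply: eq_bigr => k _.
by rewrite !mxE mulrBr.
Qed.

Lemma cvg_fsum (I : finType) (F : I -> nat -> R) (L : I -> R) :
  (forall i, F i @ \oo --> L i) ->
  (fun k => \sum_i F i k) @ \oo --> \sum_i L i.
Proof.
move=> H.
suff: forall s : seq I, (fun k => \sum_(i <- s) F i k) @ \oo --> \sum_(i <- s) L i.
  by move/(_ (index_enum I)).
elim=> [|i s IH].
  have -> : (fun k => \sum_(i <- [::]) F i k) = (fun _ => 0).
    by apply/funext => k; rewrite big_nil.
  by rewrite big_nil; exact: cvg_cst.
have -> : (fun k => \sum_(j <- i :: s) F j k) =
          (fun k => F i k + \sum_(j <- s) F j k).
  by apply/funext => k; rewrite big_cons.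
by rewrite big_cons; apply: cvgD.
Qed.

Lemma cvg_qdot d (g : 'rV[rat]_d) (x : nat -> 'rV[R]_d) (X : 'rV[R]_d) :
  (forall l, (fun k => x k 0 l) @ \oo --> X 0 l) ->
  (fun k => qdot g (x k)) @ \oo --> qdot g X.
Proof.
move=> H; rewrite /qdot; apply: cvg_fsum => l.
exact: cvgMl_tmp.
Qed.

Lemma cvg_mulmx p q (x : nat -> 'rV[R]_p) (X : 'rV[R]_p) (A : 'M[R]_(p, q)) :
  (forall l, (fun k => x k 0 l) @ \oo --> X 0 l) ->
  forall l, (fun k => (x k *m A) 0 l) @ \oo --> (X *m A) 0 l.
Proof.
move=> H l.
have -> : (fun k => (x k *m A) 0 l) = (fun k => \sum_j x k 0 j * A j l).
  by apply/funext => k; rewrite mxE.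
rewrite mxE; apply: cvg_fsum => j.
exact: cvgMr_tmp.
Qed.

End Helpers.


Section Key.
Variables (R : realType) (d : nat) (I : finType) (f : I -> 'rV[rat]_d).

Definition Mf : 'M[R]_(d, #|I|) := \matrix_(k, c) ratr (f (enum_val c) 0 k).

Lemma MfE (x : 'rV[R]_d) c : (x *m Mf) 0 c = qdot (f (enum_val c)) x.
Proof. rewrite mxE /qdot; apply: eq_bigr => k _; by rewrite mxE mulrC. Qed.

Lemma MfE' (x : 'rV[R]_d) i : qdot (f i) x = (x *m Mf) 0 (enum_rank i).
Proof. by rewrite MfE enum_rankK. Qed.

Lemma key (x : nat -> 'rV[R]_d) (y : I -> R) (J : finType) (P : J -> bool)
  (g : J -> 'rV[rat]_d) :
  (forall i, (fun k => qdot (f i) (x k)) @ \oo --> y i) ->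
  (forall j, P j -> (fun k => qdot (g j) (x k)) @ \oo --> +oo) ->
  exists a z : 'rV[R]_d, (forall i, qdot (f i) a = y i) /\
    (forall i, qdot (f i) z = 0) /\ (forall j, P j -> 0 < qdot (g j) z).
Proof.
move=> Hf Hg.
pose Y : 'rV[R]_#|I| := \row_c y (enum_val c).
have HY : forall c, (fun k => (x k *m Mf) 0 c) @ \oo --> Y 0 c.
  move=> c; rewrite mxE.
  have -> : (fun k => (x k *m Mf) 0 c) = (fun k => qdot (f (enum_val c)) (x k)).
    by apply/funext => k; rewrite MfE.
  exact: Hf.
have YM : (Y <= Mf)%MS.
  rewrite submxE; apply/eqP/rowP => l.
  have H := @cvg_mulmx R _ _ _ _ (cokermx Mf) HY l.
  have E : (fun k => ((x k *m Mf) *m cokermx Mf) 0 l) = (fun _ => 0).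
    by apply/funext => k; rewrite -mulmxA mulmx_coker mulmx0 mxE.
  rewrite E in H.
  have := cvg_lim (@norm_hausdorff _ _) H.
  rewrite lim_cst; last exact: norm_hausdorff.
  by move=> <-; rewrite mxE.
pose a := Y *m pinvmx Mf.
have aM : a *m Mf = Y by rewrite mulmxKpV.
pose w k := (x k *m Mf) *m pinvmx Mf.
pose zz k := x k - w k.
have zzM : forall k, zz k *m Mf = 0.
  move=> k; rewrite /zz mulmxBl /w mulmxKpV ?submxMl //.
  by rewrite subrr.
have Hw : forall j, (fun k => qdot (g j) (w k)) @ \oo --> qdot (g j) a.
  move=> j; apply: cvg_qdot => l.
  exact: cvg_mulmx.
have ev : \forall k \near \oo, forall j, P j -> 0 < qdot (g j) (zz k).
  apply: filter_forall => j.
  case Pj: (P j); last first.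
    by apply: nearW.
  move: (Hg j Pj) => /cvgryPge/(_ (qdot (g j) a + 2)) H1.
  move: (Hw j) => /cvgrPdist_lt/(_ 1 ltr01) H2.
  move: H1 H2; apply: filterS2 => k H1 H2 _.
  rewrite /zz qdotBr.
  move: H2; rewrite ltr_distlC => /andP[_ H2].
  lra.
have [K HK] := filter_ex ev.
exists a, (zz K); split; [|split].
- by move=> i; rewrite MfE' aM mxE enum_rankK.
- by move=> i; rewrite MfE' zzM mxE.
- exact: HK.
Qed.

End Key.


Section Scalar.
Variable R : realType.

Definition zs (al p q l : R) (k : nat) : R :=
  al + (- l * harmonic k) * p + k%:R * q.

Lemma h_bnd k : 0 < (harmonic k : R) <= 1.
Proof.
rewrite /= invr_gt0 ltr0n /= invf_le1 ?ltr0n // ler1n //.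
Qed.

Lemma hd_bnd k : 0 < (harmonic k : R) - harmonic k.+1 <= 1.
Proof.
apply/andP; split.
  rewrite subr_gt0 /= ltf_pV2 ?posrE ?ltr0n // ltr_nat //.
have /andP[h1 h2] := h_bnd k; have /andP[h3 h4] := h_bnd k.+1.
lra.
Qed.

Lemma zs_step al p q l k :
  zs al p q l k.+1 - zs al p q l k = (l * (harmonic k - harmonic k.+1)) * p + q.
Proof.
rewrite /zs -addn1 natrD.
set h1 := harmonic (k + 1)%N; set h0 := harmonic k.
ring.
Qed.

Lemma zs_inc al p q l : 0 < l ->
  (q = 0 /\ 0 < p) \/ (0 < q /\ l * (`|p| + 1) < q) ->
  forall k, zs al p q l k < zs al p q l k.+1.
Proof.
move=> l0 H k; rewrite -subr_gt0 zs_step.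
have /andP[d0 d1] := hd_bnd k.
set t := l * _.
have t0 : 0 < t by rewrite /t mulr_gt0.
have t1 : t <= l by rewrite /t ler_piMr // ltW.
have pn : - `|p| <= p by have := ler_norm (- p); rewrite normrN; lra.
have pa : 0 <= `|p| by [].
case: H => [[-> p0]|[q0 lq]].
  by rewrite addr0 mulr_gt0.
have e1 : 0 <= t * (p + `|p|) by rewrite mulr_ge0 ?(ltW t0) // -lerBlDr sub0r.
have e2 : 0 <= (l - t) * `|p| by rewrite mulr_ge0 // subr_ge0.
move: e1 e2; lra.
Qed.

Lemma zs_cvg al p l : zs al p 0 l @ \oo --> al.
Proof.
have -> : zs al p 0 l = (fun k => al + (- l * p) * harmonic k).
  by apply/funext => k; rewrite /zs mulr0 addr0 mulrAC.
have : (fun k => al + (- l * p) * harmonic k) @ \oo --> al + (- l * p) * 0.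
  apply: cvgD; first exact: cvg_cst.
  exact: cvgMl_tmp cvg_harmonic.
by rewrite mulr0 addr0.
Qed.

Lemma zs_infty al p q l : 0 < l -> 0 < q -> zs al p q l @ \oo --> +oo.
Proof.
move=> l0 q0; apply/cvgryPge => A.
move: (@cvgr_idn R) => /cvgryPge/(_ ((A - al + l * `|p|) / q)).
apply: filterS => k Hk.
rewrite /zs.
have /andP[h0 h1] := h_bnd k.
set h := harmonic k in h0 h1 *.
have pn : - `|p| <= p by have := ler_norm (- p); rewrite normrN; lra.
have pa : 0 <= `|p| by [].
have : A - al + l * `|p| <= k%:R * q by rewrite -ler_pdivrMr.
have e1 : 0 <= l * h * (`|p| - p) by rewrite !mulr_ge0 ?(ltW l0) ?(ltW h0) // subr_ge0 ler_norm.
have e2 : 0 <= l * (1 - h) * `|p| by rewrite !mulr_ge0 ?(ltW l0) // subr_ge0.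
have : (- l * h) * p >= - (l * `|p|).
  move: e1 e2; lra.
lra.
Qed.

Lemma zs_neg al p q l k : zs al p q l k = - zs (- al) (- p) (- q) l k.
Proof. rewrite /zs; ring. Qed.

End Scalar.


Definition tfin (t : ptype) : bool :=
  match t with TNeg | TZero | TPos => true | _ => false end.
Definition tom (t : ptype) : bool :=
  match t with TNegOmega | TPosOmega => true | _ => false end.
Definition gsel {d} (t : ptype) (x : 'rV[rat]_d) : 'rV[rat]_d :=
  match t with TNegOmega => - x | _ => x end.

Arguments zs {R}.
Arguments zs_cvg {R}.
Arguments zs_infty {R}.
Arguments zs_inc {R}.
Arguments zs_neg {R}.
Ltac ttac := repeat (first [split | intro]); try done;
  try (by match goal with H : _ \/ _ |- _ => case: H end).

Section Parts.
Variable R : realType.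

Lemma shift1 (u : nat -> R) (l : set_system R) :
  u @ \oo --> l -> (fun k => u k.+1) @ \oo --> l.
Proof. by move=> H; rewrite -(cvg_shiftS u) in H. Qed.

Lemma fwd_one d (phi : 'rV[rat]_d) (v : \bar R) (t : ptype)
  (A : nat -> 'rV[R]_d) (a z : 'rV[R]_d) :
  seq_behaves (fun k => qdot phi (A k)) v t ->
  (tfin t -> qdot phi a = fine v) -> (tfin t -> qdot phi z = 0) ->
  (tom t -> 0 < qdot (gsel t phi) z) ->
  ((t = TNeg \/ t = TPos) -> (qdot phi a)%:E = v /\ qdot phi z = 0) /\
  (t = TZero -> (qdot phi a)%:E = v /\ qdot phi (A 2 - A 1) = 0 /\ qdot phi z = 0) /\
  (t = TPos -> 0 < qdot phi (A 2 - A 1)) /\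
  (t = TNeg -> qdot phi (A 2 - A 1) < 0) /\
  (t = TPosOmega -> 0 < qdot phi z) /\
  (t = TNegOmega -> qdot phi z < 0).
Proof.
case: t => /=.
- move=> [-> _] _ _ /(_ isT); rewrite qdotNl oppr_gt0 => H.
  ttac.
- move=> [c [-> [Hinc _]]] Ha Hz _.
  rewrite Ha ?Hz //; ttac.
  by rewrite qdotBr subr_lt0; apply: Hinc.
- move=> [c [-> Hc]] Ha Hz _.
  rewrite Ha ?Hz //; ttac.
  by rewrite qdotBr !Hc subrr.
- move=> [c [-> [Hinc _]]] Ha Hz _.
  rewrite Ha ?Hz //; ttac.
  by rewrite qdotBr subr_gt0; apply: Hinc.
- move=> [-> _] _ _ /(_ isT) H.
  ttac.
Qed.

Lemma zs_dec_cvg (al p l : R) : 0 < l -> p < 0 ->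
  (forall k, zs al p 0 l k.+1 < zs al p 0 l k) /\ zs al p 0 l @ \oo --> al.
Proof.
move=> l0 p0.
have E : zs al p 0 l = (fun k => - zs (- al) (- p) (- 0) l k).
  by apply/funext => k; rewrite -zs_neg.
rewrite E; split.
  move=> k; rewrite ltrN2; apply: zs_inc => //; left; split; first by rewrite oppr0.
  by rewrite oppr_gt0.
rewrite oppr0 -[X in _ --> X]opprK.
exact: (cvgN (zs_cvg _ _ _)).
Qed.

Lemma zs_dec_inf (al p q l : R) : 0 < l -> q < 0 -> l * (`|p| + 1) < - q ->
  (forall k, zs al p q l k.+1 < zs al p q l k) /\ zs al p q l @ \oo --> -oo.
Proof.
move=> l0 q0 lq.
have E : zs al p q l = (fun k => - zs (- al) (- p) (- q) l k).
  by apply/funext => k; rewrite -zs_neg.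
rewrite E; split.
  move=> k; rewrite ltrN2; apply: zs_inc => //; right; split.
    by rewrite oppr_gt0.
  by rewrite normrN.
apply/cvgNry.
have -> : - (fun k => - zs (- al) (- p) (- q) l k) = zs (- al) (- p) (- q) l.
  by apply/funext => k /=; rewrite opprK.
by apply: zs_infty => //; rewrite oppr_gt0.
Qed.

Lemma bwd_one (al p q l : R) (v : \bar R) (t : ptype) :
  0 < l -> (q != 0 -> l * (`|p| + 1) < `|q|) ->
  (t = TPosOmega -> v = +oo%E) /\ (t = TNegOmega -> v = -oo%E) ->
  ((t = TNeg \/ t = TPos) -> al%:E = v /\ q = 0) ->
  (t = TZero -> al%:E = v /\ p = 0 /\ q = 0) ->
  (t = TPos -> 0 < p) -> (t = TNeg -> p < 0) ->
  (t = TPosOmega -> 0 < q) -> (t = TNegOmega -> q < 0) ->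
  seq_behaves (zs al p q l) v t.
Proof.
move=> l0 Hl [w1 w2] H1 H2 H3 H4 H5 H6.
case: t w1 w2 H1 H2 H3 H4 H5 H6 => /=.
- move=> _ /(_ erefl) -> _ _ _ _ _ /(_ erefl) q0.
  split => //.
  apply: zs_dec_inf => //.
  by rewrite -(ltr0_norm q0); apply: Hl; rewrite lt_eqF.
- move=> _ _ /(_ (or_introl erefl)) [<- ->] _ _ /(_ erefl) p0 _ _.
  by exists al; split => //; apply: zs_dec_cvg.
- move=> _ _ _ /(_ erefl) [<- [-> ->]] _ _ _ _.
  exists al; split => // k; rewrite /zs !mulr0 !addr0 //.
- move=> _ _ /(_ (or_intror erefl)) [<- ->] _ /(_ erefl) p0 _ _ _.
  exists al; split => //; split; last exact: zs_cvg.
  by apply: zs_inc => //; left.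
- move=> /(_ erefl) -> _ _ _ _ _ /(_ erefl) q0 _.
  split => //; split; last exact: zs_infty.
  apply: zs_inc => //; right; split => //.
  by rewrite -(gtr0_norm q0); apply: Hl; rewrite gt_eqF.
Qed.

End Parts.


Arguments zs {R}.
Arguments zs_cvg {R}.
Arguments zs_infty {R}.
Arguments zs_inc {R}.
Arguments fwd_one {R}.
Arguments bwd_one {R}.
Arguments zs_dec_cvg {R}.
Arguments zs_dec_inf {R}.
Arguments shift1 {R}.

Lemma mono_inj (R : realType) (z : nat -> R) :
  (forall k, z k < z k.+1) \/ (forall k, z k.+1 < z k) -> injective z.
Proof.
case=> H k1 k2 E; case: (ltngtP k1 k2) => // h; exfalso.
- have := @homo_ltn _ z (fun x y => x < y) (fun y x z => @lt_trans _ _ y x z) H _ _ h.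
  by rewrite E ltxx.
- have := @homo_ltn _ z (fun x y => x < y) (fun y x z => @lt_trans _ _ y x z) H _ _ h.
  by rewrite E ltxx.
- have := @homo_ltn _ z (fun x y => y < x) (fun y x z h1 h2 => lt_trans h2 h1) H _ _ h.
  by rewrite E ltxx.
- have := @homo_ltn _ z (fun x y => y < x) (fun y x z h1 h2 => lt_trans h2 h1) H _ _ h.
  by rewrite E ltxx.
Qed.

Theorem mainTheorem13 (R : realType) (d e n m : nat)
  (r s : 'I_n -> 'rV[rat]_d) (t : 'I_n -> 'rV[rat]_e) (h : 'I_n -> rat)
  (u v : 'I_m -> 'rV[rat]_d) (w : 'I_m -> 'rV[rat]_e) (dd : 'I_m -> rat)
  (c : 'rV[R]_e)
  (rho sigma : 'I_n -> \bar R) (trho tsigma : 'I_n -> ptype)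
  (wf_rho : profile_wf rho trho) (wf_sigma : profile_wf sigma tsigma) :
  (exists a : nat -> 'rV[R]_d,
      compatible r s rho sigma trho tsigma a /\ eq_constraints u v w dd c a)
  <->
  (exists a dc dinf : 'rV[R]_d, dc != 0 /\
     (forall i : 'I_n,
       (* (1) *)
       ((trho i = TNeg \/ trho i = TPos) ->
          (qdot (r i) a)%:E = rho i /\ qdot (r i) dinf = 0) /\
       ((tsigma i = TNeg \/ tsigma i = TPos) ->
          (qdot (s i) a)%:E = sigma i /\ qdot (s i) dinf = 0) /\
       (* (2) *)
       (trho i = TZero ->
          (qdot (r i) a)%:E = rho i /\ qdot (r i) dc = 0 /\ qdot (r i) dinf = 0) /\
       (tsigma i = TZero ->
          (qdot (s i) a)%:E = sigma i /\ qdot (s i) dc = 0 /\ qdot (s i) dinf = 0) /\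
       (* (3) *)
       (trho i = TPos -> 0 < qdot (r i) dc) /\
       (trho i = TNeg -> qdot (r i) dc < 0) /\
       (tsigma i = TPos -> 0 < qdot (s i) dc) /\
       (tsigma i = TNeg -> qdot (s i) dc < 0) /\
       (* (4) *)
       (trho i = TPosOmega -> 0 < qdot (r i) dinf) /\
       (trho i = TNegOmega -> qdot (r i) dinf < 0) /\
       (tsigma i = TPosOmega -> 0 < qdot (s i) dinf) /\
       (tsigma i = TNegOmega -> qdot (s i) dinf < 0)) /\
     (forall j : 'I_m,
       (* (5) *)
       qdot (u j) dc = 0 /\ qdot (u j) dinf = 0 /\
       qdot (v j) dc = 0 /\ qdot (v j) dinf = 0 /\
       qdot (u j - v j) a = qdot (w j) c + ratr (dd j))).
Proof.
split.
- move=> [A [[Ainj Hb] Heq]].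
  pose fam (i : ('I_n + 'I_n) + ('I_m + 'I_m)) : 'rV[rat]_d :=
    match i with
    | inl (inl i) => if tfin (trho i) then r i else 0
    | inl (inr i) => if tfin (tsigma i) then s i else 0
    | inr (inl j) => u j
    | inr (inr j) => v j end.
  pose yv (i : ('I_n + 'I_n) + ('I_m + 'I_m)) : R :=
    match i with
    | inl (inl i) => if tfin (trho i) then fine (rho i) else 0
    | inl (inr i) => if tfin (tsigma i) then fine (sigma i) else 0
    | inr (inl j) => qdot (u j) (A 1%N)
    | inr (inr j) => qdot (v j) (A 1%N) end.
  pose P (j : 'I_n + 'I_n) : bool :=
    match j with inl i => tom (trho i) | inr i => tom (tsigma i) end.
  pose g (j : 'I_n + 'I_n) : 'rV[rat]_d :=
    match j with inl i => gsel (trho i) (r i) | inr i => gsel (tsigma i) (s i) end.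
  have cvg_fin : forall (phi : 'rV[rat]_d) (vv : \bar R) (tt : ptype),
      seq_behaves (fun k => qdot phi (A k)) vv tt ->
      (fun k => qdot (if tfin tt then phi else 0) (A k.+1)) @ \oo -->
        (if tfin tt then fine vv else 0).
    have E0 : (fun k => qdot (0 : 'rV[rat]_d) (A k.+1)) = (fun _ => 0).
      by apply/funext => k; rewrite qdot0l.
    move=> phi vv [] /=.
    + by move=> _; rewrite E0; exact: cvg_cst.
    + by move=> [cc [-> [_ Hc]]] /=; exact: (shift1 _ _ Hc).
    + move=> [cc [-> Hc]] /=.
      have -> : (fun k => qdot phi (A k.+1)) = (fun _ => cc).
        by apply/funext => k; rewrite Hc.
      exact: cvg_cst.
    + by move=> [cc [-> [_ Hc]]] /=; exact: (shift1 _ _ Hc).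
    + by move=> _; rewrite E0; exact: cvg_cst.
  have div_om : forall (phi : 'rV[rat]_d) (vv : \bar R) (tt : ptype),
      seq_behaves (fun k => qdot phi (A k)) vv tt -> tom tt ->
      (fun k => qdot (gsel tt phi) (A k.+1)) @ \oo --> +oo.
    move=> phi vv [] //=.
    + move=> [_ [_ H]] _.
      have -> : (fun k => qdot (- phi) (A k.+1)) = - (fun k => qdot phi (A k.+1)).
        by apply/funext => k /=; rewrite qdotNl.
      by apply/cvgNry; exact: (shift1 _ _ H).
    + by move=> [_ [_ H]] _; exact: (shift1 _ _ H).
  have H1 : forall i, (fun k => qdot (fam i) (A k.+1)) @ \oo --> yv i.
    move=> [[i|i]|[j|j]] /=.
    + exact: cvg_fin (Hb i).1.
    + exact: cvg_fin (Hb i).2.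
    + have -> : (fun k => qdot (u j) (A k.+1)) = (fun _ => qdot (u j) (A 1%N)).
        apply/funext => k.
        by rewrite (Heq j k.+1 k.+2 (ltnSn _)) (Heq j 1%N k.+2 isT).
      exact: cvg_cst.
    + have -> : (fun k => qdot (v j) (A k.+1)) = (fun _ => qdot (v j) (A 1%N)).
        apply/funext => k.
        have := Heq j 0%N k.+1 isT; rewrite (Heq j 0%N 1%N isT).
        lra.
      exact: cvg_cst.
  have H2 : forall j, P j -> (fun k => qdot (g j) (A k.+1)) @ \oo --> +oo.
    move=> [i|i] /= Pi; [exact: div_om (Hb i).1 Pi | exact: div_om (Hb i).2 Pi].
  have [a [z [Ha [Hz Hg]]]] :=
    @key R d _ fam (fun k => A k.+1) yv _ P g H1 H2.
  exists a, (A 2%N - A 1%N), z; split; [|split].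
  + by rewrite subr_eq0; apply/eqP => /Ainj.
  + move=> i.
    have R1 := fwd_one d (r i) (rho i) (trho i) A a z (Hb i).1.
    have ra : tfin (trho i) -> qdot (r i) a = fine (rho i).
      by move=> F; move: (Ha (inl (inl i))); rewrite /= F.
    have rz : tfin (trho i) -> qdot (r i) z = 0.
      by move=> F; move: (Hz (inl (inl i))); rewrite /= F.
    have rg : tom (trho i) -> 0 < qdot (gsel (trho i) (r i)) z.
      exact: (Hg (inl i)).
    move: {R1 ra rz rg} (R1 ra rz rg) => [r1 [r2 [r3 [r4 [r5 r6]]]]].
    have S1 := fwd_one d (s i) (sigma i) (tsigma i) A a z (Hb i).2.
    have sa : tfin (tsigma i) -> qdot (s i) a = fine (sigma i).
      by move=> F; move: (Ha (inl (inr i))); rewrite /= F.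
    have sz : tfin (tsigma i) -> qdot (s i) z = 0.
      by move=> F; move: (Hz (inl (inr i))); rewrite /= F.
    have sg : tom (tsigma i) -> 0 < qdot (gsel (tsigma i) (s i)) z.
      exact: (Hg (inr i)).
    move: {S1 sa sz sg} (S1 sa sz sg) => [s1 [s2 [s3 [s4 [s5 s6]]]]].
    exact: (conj r1 (conj s1 (conj r2 (conj s2 (conj r3 (conj r4 (conj s3 (conj s4 (conj r5 (conj r6 (conj s5 s6))))))))))).
  + move=> j.
    have e01 := Heq j 0%N 1%N isT; have e02 := Heq j 0%N 2%N isT.
    have e12 := Heq j 1%N 2%N isT; have e13 := Heq j 1%N 3%N isT.
    have e23 := Heq j 2%N 3%N isT.
    have ua := Ha (inr (inl j)); have va := Ha (inr (inr j)).
    have uz := Hz (inr (inl j)); have vz := Hz (inr (inr j)).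
    rewrite /= in ua va uz vz.
    rewrite !qdotBr qdotBl ua va uz vz.
    split; [lra|split; [by []|split; [lra|split; [by []|lra]]]].
- move=> [a [dc [dinf [Hdc [Hi Hj]]]]].
  have [j0 Hj0] : exists j0, dc 0 j0 != 0.
    case: (boolP [exists j, dc 0 j != 0]) => [/existsP //| /existsPn H].
    move: Hdc; have -> : dc = 0.
      by apply/rowP => j; rewrite mxE; apply/eqP; exact/negPn/H.
    by rewrite eqxx.
  pose B (p q : R) := if q == 0 then 0 else (`|p| + 1) / `|q|.
  have B0 : forall p q, 0 <= B p q.
    by move=> p q; rewrite /B; case: eqP => // _; rewrite divr_ge0.
  pose F i := B (qdot (r i) dc) (qdot (r i) dinf) + B (qdot (s i) dc) (qdot (s i) dinf).
  pose S := \sum_i F i + B (dc 0 j0) (dinf 0 j0).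
  have F0 : forall i, 0 <= F i by move=> i; rewrite addr_ge0.
  have S0 : 0 <= S by rewrite addr_ge0 // sumr_ge0.
  pose l := (1 + S)^-1.
  have l0 : 0 < l by rewrite invr_gt0; lra.
  have Bl : forall p q, B p q <= S -> q != 0 -> l * (`|p| + 1) < `|q|.
    move=> p q HB q0; move: HB; rewrite /B (negbTE q0) => HB.
    have nq : 0 < `|q| by rewrite normr_gt0.
    have : (`|p| + 1) / `|q| < 1 + S by lra.
    rewrite ltr_pdivrMr // => H.
    rewrite /l mulrC ltr_pdivrMr; last lra.
    by rewrite mulrC.
  have FS : forall i, F i <= S.
    move=> i; rewrite /S (bigD1 i) //= -addrA lerDl addr_ge0 //.
    by rewrite sumr_ge0.
  have Lr : forall i, qdot (r i) dinf != 0 ->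
      l * (`|qdot (r i) dc| + 1) < `|qdot (r i) dinf|.
    by move=> i; apply: Bl; apply: le_trans (FS i); rewrite /F lerDl.
  have Ls : forall i, qdot (s i) dinf != 0 ->
      l * (`|qdot (s i) dc| + 1) < `|qdot (s i) dinf|.
    by move=> i; apply: Bl; apply: le_trans (FS i); rewrite /F lerDr.
  have Lc : dinf 0 j0 != 0 -> l * (`|dc 0 j0| + 1) < `|dinf 0 j0|.
    by apply: Bl; rewrite /S lerDr sumr_ge0.
  pose A k := a + (- l * harmonic k) *: dc + k%:R *: dinf.
  have Aqk : forall phi k, qdot phi (A k) = zs (qdot phi a) (qdot phi dc) (qdot phi dinf) l k.
    by move=> phi k; rewrite /A !qdotDr !qdotZr /zs.
  have Aq : forall phi, (fun k => qdot phi (A k)) =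
      zs (qdot phi a) (qdot phi dc) (qdot phi dinf) l.
    by move=> phi; apply/funext => k; rewrite Aqk.
  exists A; split; [split|].
  + have Ac : forall k, A k 0 j0 = zs (a 0 j0) (dc 0 j0) (dinf 0 j0) l k.
      by move=> k; rewrite /A !mxE /zs.
    have mono : (forall k, zs (a 0 j0) (dc 0 j0) (dinf 0 j0) l k <
                           zs (a 0 j0) (dc 0 j0) (dinf 0 j0) l k.+1) \/
                (forall k, zs (a 0 j0) (dc 0 j0) (dinf 0 j0) l k.+1 <
                           zs (a 0 j0) (dc 0 j0) (dinf 0 j0) l k).
      case: (ltrgtP (dinf 0 j0) 0) => hq.
      * right; apply: (fun H => (zs_dec_inf _ _ _ _ l0 hq H).1).
        by rewrite -(ltr0_norm hq); apply: Lc; rewrite lt_eqF.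
      * left; apply: zs_inc => //; right; split => //.
        by rewrite -(gtr0_norm hq); apply: Lc; rewrite gt_eqF.
      * rewrite hq; case: (ltrgtP (dc 0 j0) 0) => hp.
        -- by right; apply: (zs_dec_cvg _ _ _ l0 hp).1.
        -- by left; apply: zs_inc => //; left.
        -- by rewrite hp eqxx in Hj0.
    move=> k1 k2 E.
    apply: (@mono_inj R _ mono).
    by rewrite -!Ac E.
  + move=> i; move: (Hi i) => [h1 [h2 [h3 [h4 [h5 [h6 [h7 [h8 [h9 [h10 [h11 h12]]]]]]]]]]].
    rewrite !Aq; split.
    * exact: (bwd_one _ _ _ _ _ _ l0 (@Lr i) (wf_rho i) h1 h3 h5 h6 h9 h10).
    * exact: (bwd_one _ _ _ _ _ _ l0 (@Ls i) (wf_sigma i) h2 h4 h7 h8 h11 h12).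
  + move=> j k1 k2 _; rewrite !Aqk.
    move: (Hj j) => [u1 [u2 [v1 [v2 ee]]]].
    rewrite u1 u2 v1 v2 /zs !mulr0 !addr0.
    move: ee; rewrite qdotBl; lra.
Qed.
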